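(* Let $f=f_1+f_2$ and $l=l_1+l_2$ be as in the context and assume there are $C\ge0$, $C_1\ge0$, $C_2,C_3>0$ such that for all $x\in H$, $\mu\in\mathcal P_2(H)$, $q\in\tilde\Lambda$: $|f_2(x,\mu,q)|\le C(1+|q|_\Lambda)$ and $-C_1+C_2|q|_\Lambda^2\le l_2(x,\mu,q)\le C_1+C_3|q|_\Lambda^2$ (and $|f(x,\mu,q)|_{-1}\le C(1+|x|_{-1}+\mathcal M_{-1,r}^{1/r}(\mu)+|q|_\Lambda)$ for a fixed $r\in[1,2)$). Then for every $\tilde C>0$ there is a constant $K>0$ such that $$\mathcal H_n(\mathbf x,\mu,\mathbf p)=\mathcal H_n^{K\sqrt n}(\mathbf x,\mu,\mathbf p)$$ for all $n\in\mathbb N$, $\mu\in\mathcal P_2(H)$ and $\mathbf x,\mathbf p\in H^n$ with $|\mathbf p|_{H^n}\le\tilde C/\sqrt n$.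
   Context: $H,\Lambda$ real separable Hilbert spaces ($H$: inner product $\langle\cdot,\cdot\rangle$, norm $|\cdot|$; $\Lambda$: norm $|\cdot|_\Lambda$), $\tilde\Lambda\subset\Lambda$ convex. $B\in L(H)$ self-adjoint, strictly positive, $|x|_{-1}^2=\langle Bx,x\rangle$; $\mathcal P_2(H)$ probability measures with finite second moment; $\mathcal M_{-1,r}(\mu)=\int|x|_{-1}^r\mu(dx)$. $f=f_1+f_2$ with $f_1:H\times\mathcal P_2(H)\to H$, $f_2:H\times\mathcal P_2(H)\times\Lambda\to H$; $l=l_1+l_2$ with $l_1:H\times\mathcal P_2(H)\to\mathbb R$, $l_2:H\times\mathcal P_2(H)\times\Lambda\to\mathbb R$ continuous. For $\mathbf x,\mathbf p\in H^n$, $|\mathbf p|_{H^n}=(\sum|p_i|^2)^{1/2}$, $\mathbf q\in\tilde\Lambda^n$, $|\mathbf q|_{\Lambda^n}=(\sum|q_i|_\Lambda^2)^{1/2}$, and $\mathcal H_n(\mathbf x,\mu,\mathbf p)=\frac1n\inf_{\mathbf q\in\tilde\Lambda^n}\sum_{i=1}^n(\langle f(x_i,\mu,q_i),np_i\rangle+l(x_i,\mu,q_i))$, $\mathcal H_n^m(\mathbf x,\mu,\mathbf p)=\frac1n\inf_{\mathbf q\in\tilde\Lambda^n,|\mathbf q|_{\Lambda^n}\le m}\sum_{i=1}^n(\langle f(x_i,\mu,q_i),np_i\rangle+l(x_i,\mu,q_i))$ for $m>0$. *)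

(* Defs.v *)
From HB Require Import structures.
From mathcomp Require Import all_boot all_order all_algebra.
From mathcomp Require Import all_classical all_reals all_analysis.
Import Order.TTheory GRing.Theory Num.Theory numFieldNormedType.Exports.
Set Implicit Arguments. Unset Strict Implicit. Unset Printing Implicit Defensive.
Local Open Scope classical_set_scope.
Local Open Scope ring_scope.

Section Defs.
Context {R : realType}.

Definition is_inner_product (V : normedModType R) (ip : V -> V -> R) : Prop :=
  (forall x y, ip x y = ip y x) /\
  (forall (a : R) x y z, ip (a *: x + y) z = a * ip x z + ip y z) /\
  (forall x, `|x| ^+ 2 = ip x x).

Definition separable_space (T : topologicalType) : Prop :=
  exists D : set T, countable D /\ dense D.

Definition hilbert (V : completeNormedModType R) (ip : V -> V -> R) : Prop :=
  is_inner_product ip /\ separable_space V.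

Definition convex_subset (V : normedModType R) (A : set V) : Prop :=
  forall a b, A a -> A b -> forall t : R, 0 <= t <= 1 ->
    A (t *: a + (1 - t) *: b).

Definition selfadj_strictly_pos (V : normedModType R) (ip : V -> V -> R)
  (B : {linear V -> V}) : Prop :=
  continuous B /\ (forall x y, ip (B x) y = ip x (B y)) /\
  (forall x, x != 0 -> 0 < ip (B x) x).

Definition norm_m1 (V : normedModType R) (ip : V -> V -> R) (B : V -> V) (x : V) : R :=
  Num.sqrt (ip (B x) x).

Definition borel_of (V : topologicalType) := g_sigma_algebraType (@open V).

Definition P2 (V : normedModType R) :=
  { mu : probability (borel_of V) R |
      (\int[mu]_x ((`|(x : V)| ^+ 2)%:E) < +oo)%E }.

Definition M_m1 (V : normedModType R) (ip : V -> V -> R) (B : V -> V) (r : R)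
  (mu : P2 V) : \bar R :=
  (\int[sval mu]_x (((norm_m1 ip B (x : V)) `^ r)%:E))%E.

Definition norm_n (V : normedModType R) (n : nat) (p : 'I_n -> V) : R :=
  Num.sqrt (\sum_(i < n) `|p i| ^+ 2).

Definition Ham_gen (V L P : Type) (ip : V -> V -> R) (Vscale : R -> V -> V)
  (f : V -> P -> L -> V) (l : V -> P -> L -> R) (Lt : set L)
  (constr : forall n, ('I_n -> L) -> Prop)
  (n : nat) (x : 'I_n -> V) (mu : P) (p : 'I_n -> V) : \bar R :=
  ((n%:R)^-1%:E *
   ereal_inf [set (\sum_(i < n) (ip (f (x i) mu (q i)) (Vscale n%:R (p i))
                                  + l (x i) mu (q i)))%:E
             | q in [set q : 'I_n -> L | (forall i, Lt (q i)) /\ constr n q]])%E.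

Definition Ham_n (V L : normedModType R) (ip : V -> V -> R)
  (f : V -> P2 V -> L -> V) (l : V -> P2 V -> L -> R) (Lt : set L)
  (n : nat) (x : 'I_n -> V) (mu : P2 V) (p : 'I_n -> V) : \bar R :=
  Ham_gen ip (fun a v => a *: v) f l Lt (fun _ _ => True) x mu p.

Definition Ham_n_m (V L : normedModType R) (ip : V -> V -> R)
  (f : V -> P2 V -> L -> V) (l : V -> P2 V -> L -> R) (Lt : set L) (m : R)
  (n : nat) (x : 'I_n -> V) (mu : P2 V) (p : 'I_n -> V) : \bar R :=
  Ham_gen ip (fun a v => a *: v) f l Lt (fun k q => norm_n q <= m) x mu p.

End Defs.

(* Main.v *)
Require Import Defs.
From HB Require Import structures.
From mathcomp Require Import all_boot all_order all_algebra.
From mathcomp Require Import all_classical all_reals all_analysis.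
From mathcomp Require Import ring lra.
Import Order.TTheory GRing.Theory Num.Theory numFieldNormedType.Exports.
Local Open Scope classical_set_scope.
Local Open Scope ring_scope.
Set Warnings "-all".
Set Implicit Arguments. Unset Strict Implicit.
Lemma ip0l (R : realType) (V : normedModType R) (ip : V -> V -> R)
  (hip : is_inner_product ip) z : ip 0 z = 0.
Proof.
case: hip => _ [hl _]. have := hl 1 0 0 z. rewrite scale1r addr0 mul1r.
move=> h. have : ip 0 z + 0 = ip 0 z + ip 0 z by rewrite addr0 -h.
by move/addrI.
Qed.

Lemma ipD (R : realType) (V : normedModType R) (ip : V -> V -> R)
  (hip : is_inner_product ip) x y z : ip (x + y) z = ip x z + ip y z.
Proof. case: hip => _ [hl _]. by have := hl 1 x y z; rewrite scale1r mul1r. Qed.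

Lemma ipZ (R : realType) (V : normedModType R) (ip : V -> V -> R)
  (hip : is_inner_product ip) a x z : ip (a *: x) z = a * ip x z.
Proof.
have h0 := ip0l hip z. case: hip => _ [hl _].
by have := hl a x 0 z; rewrite addr0 h0 addr0.
Qed.

Lemma ipDr (R : realType) (V : normedModType R) (ip : V -> V -> R)
  (hip : is_inner_product ip) x y z : ip z (x + y) = ip z x + ip z y.
Proof. have [hs _] := hip. by rewrite hs (ipD hip) !(hs z). Qed.

Lemma ipZr (R : realType) (V : normedModType R) (ip : V -> V -> R)
  (hip : is_inner_product ip) a x z : ip z (a *: x) = a * ip z x.
Proof. have [hs _] := hip. by rewrite hs (ipZ hip) (hs z). Qed.

Lemma ip_amgm (R : realType) (V : normedModType R) (ip : V -> V -> R)
  (hip : is_inner_product ip) (e : R) u v : 0 < e ->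
  ip u v <= (e * `|u| ^+ 2 + e^-1 * `|v| ^+ 2) / 2.
Proof.
move=> e0.
have [hs [_ hn]] := hip.
have h : 0 <= `|e *: u - v| ^+ 2 by apply: sqr_ge0.
have ex : `|e *: u - v| ^+ 2 = e ^+ 2 * `|u| ^+ 2 - 2 * e * ip u v + `|v| ^+ 2.
  rewrite [LHS]hn -scaleN1r !(ipD hip) !(ipZ hip) !(ipDr hip) !(ipZr hip) -!hn (hs v u).
  ring.
rewrite ex in h.
have e2 : 0 < 2 * e by rewrite mulr_gt0.
rewrite ler_pdivlMr //.
rewrite -(ler_pM2l e2).
have -> : 2 * e * ((e * `|u| ^+ 2 + e^-1 * `|v| ^+ 2)) = 2 * (e^2 * `|u| ^+ 2 + `|v| ^+ 2).
  by field; rewrite gt_eqF.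
nra.
Qed.

Lemma ip_amgmN (R : realType) (V : normedModType R) (ip : V -> V -> R)
  (hip : is_inner_product ip) (e : R) u v : 0 < e ->
  - ip u v <= (e * `|u| ^+ 2 + e^-1 * `|v| ^+ 2) / 2.
Proof.
move=> e0. have := ip_amgm hip u (-v) e0. rewrite normrN.
have [hs _] := hip. by rewrite hs -scaleN1r (ipZ hip) hs mulN1r.
Qed.

Lemma sum_lin (R : realType) (n : nat) (a b c : R) (s t : 'I_n -> R) :
  \sum_(i < n) (a * s i + b + c * t i) =
  a * \sum_(i < n) s i + n%:R * b + c * \sum_(i < n) t i.
Proof.
by rewrite !big_split /= -!mulr_sumr sumr_const card_ord mulr_natl.
Qed.

Lemma inf_eq (R : realType) (T : Type) (P Q : set T) (v : T -> R) :
  Q `<=` P -> (forall q, P q -> exists2 q', Q q' & v q' <= v q) ->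
  ereal_inf [set (v q)%:E | q in P] = ereal_inf [set (v q)%:E | q in Q].
Proof.
move=> QP h; apply/le_anti/andP; split.
  by apply: le_ereal_inf => _ [q Qq <-]; exists q => //; apply: QP.
apply: le_ereal_inf_tmp => _ [q Pq <-].
have [q' Qq' le] := h q Pq.
apply: (@le_trans _ _ (v q')%:E); last by rewrite lee_fin.
by apply: ereal_inf_lbound; exists q'.
Qed.

Lemma norm_n_le (R : realType) (V : normedModType R) (n : nat) (q : 'I_n -> V) (K : R) :
  0 <= K -> (norm_n q <= K * Num.sqrt n%:R) = (\sum_(i < n) `|q i| ^+ 2 <= K ^+ 2 * n%:R).
Proof.
move=> K0.
have -> : K * Num.sqrt n%:R = Num.sqrt (K ^+ 2 * n%:R).
  by rewrite sqrtrM ?sqr_ge0 // sqrtr_sqr ger0_norm.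
rewrite /norm_n ler_sqrt // mulr_ge0 ?sqr_ge0 //.
Qed.

Lemma normp_bound (R : realType) (V : normedModType R) (n : nat) (p : 'I_n -> V) (Ct : R) :
  (0 < n)%N -> norm_n p <= Ct / Num.sqrt n%:R ->
  n%:R ^+ 2 * \sum_(i < n) `|p i| ^+ 2 <= n%:R * Ct ^+ 2.
Proof.
move=> n0 h.
have s0 : 0 <= \sum_(i < n) `|p i| ^+ 2 by apply: sumr_ge0 => i _; apply: sqr_ge0.
have hn : 0 < n%:R :> R by rewrite ltr0n.
have := ler_pM (sqrtr_ge0 _) (sqrtr_ge0 _) h h.
rewrite -expr2 sqr_sqrtr // -expr2 expr_div_n sqr_sqrtr ?ler0n //.
move=> h2.
have := ler_pM2l (x := n%:R ^+ 2) (exprn_gt0 2 hn).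
move=> /(_ _ _) H. rewrite (le_trans (_ : _ <= n%:R ^+ 2 * (Ct ^+ 2 / n%:R))) //.
  by rewrite ler_pM2l ?exprn_gt0.
rewrite le_eqVlt; apply/orP; left; apply/eqP; field.
by rewrite gt_eqF.
Qed.

Lemma final_ineq (R : realType) (n P S e C C1 C2 C3 Ct na K : R) :
  0 < n -> 0 <= P -> 0 <= S -> 0 < e -> 0 <= C -> 0 < C2 -> 0 <= na ->
  e * C ^+ 2 <= C2 / 2 ->
  n ^+ 2 * P <= n * Ct ^+ 2 ->
  K ^+ 2 * n < S ->
  2 * ((C1 + C3 * na ^+ 2 + C ^+ 2 * (1 + na) ^+ 2 / 2 + Ct ^+ 2 / 2) +
       (C1 + C2 / 2 + Ct ^+ 2 / (2 * e))) / C2 <= K ^+ 2 ->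
  n ^+ 2 / 2 * P + n * (C1 + C3 * na ^+ 2 + C ^+ 2 * (1 + na) ^+ 2 / 2) + 0 * P
  <= (C2 - e * C ^+ 2) * S + n * (- (C1 + e * C ^+ 2)) + (- (n ^+ 2 / (2 * e))) * P.
Proof.
move=> n0 P0 S0 e0 C0 C20 na0 heC hP hS hK.
set A := C1 + C3 * na ^+ 2 + C ^+ 2 * (1 + na) ^+ 2 / 2 + Ct ^+ 2 / 2.
set D := C1 + C2 / 2 + Ct ^+ 2 / (2 * e).
have f1 : 0 <= (C2 / 2 - e * C ^+ 2) * S by apply: mulr_ge0 => //; lra.
have f2 : n ^+ 2 / (2 * e) * P <= n * Ct ^+ 2 / (2 * e).
  rewrite mulrAC ler_pM2r // invr_gt0; lra.
have f3 : n * (e * C ^+ 2) <= n * (C2 / 2) by rewrite ler_pM2l.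
have f4 : C2 * (K ^+ 2 * n) <= C2 * S by rewrite ler_pM2l //; lra.
have f5 : 2 * (A + D) * n <= C2 * K ^+ 2 * n.
  rewrite ler_pM2r //. rewrite -ler_pdivrMl //. by rewrite mulrC.
have eA : n * A = n * (C1 + C3 * na ^+ 2 + C ^+ 2 * (1 + na) ^+ 2 / 2) + n * Ct ^+ 2 / 2.
  by rewrite /A; ring.
have eD : n * D = n * C1 + n * (C2 / 2) + n * Ct ^+ 2 / (2 * e).
  by rewrite /D; ring.
clearbody A D.
have hP2 : n ^+ 2 / 2 * P <= n * Ct ^+ 2 / 2.
  rewrite mulrAC ler_pM2r //; lra.
have e1 : 2 * (A + D) * n = 2 * (n * A) + 2 * (n * D) by ring.
have e2 : C2 * K ^+ 2 * n = C2 * (K ^+ 2 * n) by ring.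
have e3 : (C2 - e * C ^+ 2) * S = (C2 / 2 - e * C ^+ 2) * S + C2 * S / 2 by field.
have e4 : - (n ^+ 2 / (2 * e)) * P = - (n ^+ 2 / (2 * e) * P) by ring.
rewrite e3 e4.
lra.
Qed.

Unset Implicit Arguments. Set Strict Implicit.

Theorem lemma4p8 (R : realType) (H Lam : completeNormedModType R)
  (ip : H -> H -> R) (ipL : Lam -> Lam -> R)
  (hH : hilbert ip) (hL : hilbert ipL)
  (Lt : set Lam) (hLt : convex_subset Lt)
  (B : {linear H -> H}) (hB : selfadj_strictly_pos ip B)
  (r : R) (hr : 1 <= r < 2)
  (f1 : H -> P2 H -> H) (f2 : H -> P2 H -> Lam -> H)
  (l1 : H -> P2 H -> R) (l2 : H -> P2 H -> Lam -> R)
  (C C1 C2 C3 : R) (hC : 0 <= C) (hC1 : 0 <= C1) (hC2 : 0 < C2) (hC3 : 0 < C3)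
  (hf2 : forall x mu q, Lt q -> `|f2 x mu q| <= C * (1 + `|q|))
  (hl2 : forall x mu q, Lt q ->
     - C1 + C2 * `|q| ^+ 2 <= l2 x mu q <= C1 + C3 * `|q| ^+ 2)
  (hf : forall x mu q, Lt q ->
     ((norm_m1 ip B (f1 x mu + f2 x mu q))%:E <=
      C%:E * (1 + (norm_m1 ip B x)%:E + (M_m1 ip B r mu) `^ r^-1 + `|q|%:E))%E) :
  forall Ct : R, 0 < Ct ->
  exists K : R, 0 < K /\
    forall (n : nat), (0 < n)%N ->
    forall (mu : P2 H) (x p : 'I_n -> H),
      norm_n p <= Ct / Num.sqrt n%:R ->
      Ham_n ip (fun y nu q => f1 y nu + f2 y nu q) (fun y nu q => l1 y nu + l2 y nu q)
        Lt x mu p =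
      Ham_n_m ip (fun y nu q => f1 y nu + f2 y nu q) (fun y nu q => l1 y nu + l2 y nu q)
        Lt (K * Num.sqrt n%:R) x mu p.
Proof.
move=> Ct Ct0.
have [hip _] := hH.
case: (pselect (exists a, Lt a)) => [[a La]|noLt]; last first.
  exists 1; split => // n n0 mu x p _.
  rewrite /Ham_n /Ham_n_m /Ham_gen; congr (_ * _)%E.
  apply: inf_eq; first by move=> q [Lq _]; split.
  move=> q [Lq _]; exfalso; apply: noLt; exists (q (Ordinal n0)); exact: Lq.
pose e := C2 / (2 * (C ^+ 2 + 1)).
pose A := C1 + C3 * `|a| ^+ 2 + C ^+ 2 * (1 + `|a|) ^+ 2 / 2 + Ct ^+ 2 / 2.
pose D := C1 + C2 / 2 + Ct ^+ 2 / (2 * e).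
have c2 : 0 <= C ^+ 2 by apply: sqr_ge0.
have e0 : 0 < e.
  rewrite /e; apply: divr_gt0 => //; apply: mulr_gt0 => //; lra.
have A0 : 0 <= A.
  have : 0 <= `|a| ^+ 2 by apply: sqr_ge0.
  have : 0 <= (1 + `|a|) ^+ 2 by apply: sqr_ge0.
  have : 0 <= Ct ^+ 2 by apply: sqr_ge0.
  move=> h1 h2 h3.
  have : 0 <= C3 * `|a| ^+ 2 by apply: mulr_ge0 => //; apply: ltW.
  have : 0 <= C ^+ 2 * (1 + `|a|) ^+ 2 by apply: mulr_ge0.
  rewrite /A; lra.
have D0 : 0 <= D.
  have : 0 <= Ct ^+ 2 / (2 * e).
    apply: divr_ge0; first exact: sqr_ge0.
    apply: mulr_ge0 => //; exact: ltW.
  rewrite /D; lra.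
pose K := 1 + `|a| + 2 * (A + D) / C2.
have X0 : 0 <= 2 * (A + D) / C2.
  apply: divr_ge0; last exact: ltW.
  by apply: mulr_ge0 => //; apply: addr_ge0.
have na := normr_ge0 a.
have K1 : 1 <= K by rewrite /K; lra.
have K0 : 0 <= K by lra.
have KX : 2 * (A + D) / C2 <= K ^+ 2.
  have : 2 * (A + D) / C2 <= K by rewrite /K; lra.
  have : K <= K ^+ 2 by rewrite expr2 ler_peMl.
  lra.
have Ka : `|a| ^+ 2 <= K ^+ 2.
  rewrite ler_sqr ?nnegrE //; rewrite /K; lra.
exists K; split; first by apply: lt_le_trans K1.
move=> n n0 mu x p hp.
have hP := normp_bound n0 hp.
have n0R : 0 < n%:R :> R by rewrite ltr0n.
rewrite /Ham_n /Ham_n_m /Ham_gen; congr (_ * _)%E.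
apply: inf_eq; first by move=> q [Lq _]; split.
move=> q [Lq _].
case: (boolP (norm_n q <= K * Num.sqrt n%:R)) => hq.
  by exists q.
exists (fun _ => a).
  split => //; rewrite norm_n_le // sumr_const card_ord -[_ *+ n]mulr_natr.
  by rewrite ler_pM2r.
rewrite norm_n_le // -ltNge in hq.
have spl : forall q' : 'I_n -> Lam,
  \sum_(i < n) (ip (f1 (x i) mu + f2 (x i) mu (q' i)) (n%:R *: p i) +
                (l1 (x i) mu + l2 (x i) mu (q' i))) =
  \sum_(i < n) (ip (f1 (x i) mu) (n%:R *: p i) + l1 (x i) mu) +
  \sum_(i < n) (ip (f2 (x i) mu (q' i)) (n%:R *: p i) + l2 (x i) mu (q' i)).
  by move=> q'; rewrite -big_split; apply: eq_bigr => i _ /=; rewrite (ipD hip); ring.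
rewrite /= !spl lerD2l.
apply: le_trans (_ : _ <= \sum_(i < n) ((n%:R ^+ 2 / 2) * `|p i| ^+ 2 +
     (C1 + C3 * `|a| ^+ 2 + C ^+ 2 * (1 + `|a|) ^+ 2 / 2) + 0 * `|p i| ^+ 2)) _.
  apply: ler_sum => i _.
  have h1 := ip_amgm hip (f2 (x i) mu a) (n%:R *: p i) ltr01.
  have h2 := hl2 (x i) mu a La. move/andP: h2 => [_ h2].
  have h3 := hf2 (x i) mu a La.
  have h4 : `|f2 (x i) mu a| ^+ 2 <= C ^+ 2 * (1 + `|a|) ^+ 2.
    by rewrite -exprMn ler_sqr ?nnegrE // mulr_ge0 // addr_ge0.
  rewrite normrZ ger0_norm ?ler0n // exprMn invr1 !mul1r in h1.
  lra.
have Hlow : \sum_(i < n) ((C2 - e * C ^+ 2) * `|q i| ^+ 2 +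
     (- (C1 + e * C ^+ 2)) + (- (n%:R ^+ 2 / (2 * e))) * `|p i| ^+ 2) <=
   \sum_(i < n) (ip (f2 (x i) mu (q i)) (n%:R *: p i) + l2 (x i) mu (q i)).
  apply: ler_sum => i _.
  have h1 := ip_amgmN hip (f2 (x i) mu (q i)) (n%:R *: p i) e0.
  have h2 := hl2 (x i) mu (q i) (Lq i). move/andP: h2 => [h2 _].
  have h3 := hf2 (x i) mu (q i) (Lq i).
  have h4 : `|f2 (x i) mu (q i)| ^+ 2 <= 2 * C ^+ 2 * (1 + `|q i| ^+ 2).
    apply: (le_trans (_ : _ <= C ^+ 2 * (1 + `|q i|) ^+ 2)).
      by rewrite -exprMn ler_sqr ?nnegrE // mulr_ge0 // addr_ge0.
    have : 0 <= (1 - `|q i|) ^+ 2 by apply: sqr_ge0.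
    have : 0 <= C ^+ 2 by apply: sqr_ge0.
    nra.
  rewrite normrZ ger0_norm ?ler0n // exprMn in h1.
  have h5 : e * `|f2 (x i) mu (q i)| ^+ 2 <= e * (2 * C ^+ 2 * (1 + `|q i| ^+ 2)).
    by rewrite ler_pM2l.
  have h6 : e^-1 * (n%:R ^+ 2 * `|p i| ^+ 2) = n%:R ^+ 2 / (2 * e) * `|p i| ^+ 2 * 2.
    by field; rewrite gt_eqF.
  lra.
apply: (le_trans _ Hlow).
rewrite !sum_lin.
apply: (@final_ineq R _ _ _ _ C C1 C2 C3 Ct _ K) => //.
- by apply: sumr_ge0 => i _; apply: sqr_ge0.
- by apply: sumr_ge0 => i _; apply: sqr_ge0.
- rewrite /e mulrC mulrA ler_pdivrMr ?mulr_gt0 ?ltr_wpDl ?sqr_ge0 //.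
  have : 0 <= C ^+ 2 by apply: sqr_ge0.
  nra.
Qed.
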